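(* Fix parameters and a population size vector $\mathbf m$ as in the context, with Assumption (A), and suppose $c_P\ge\Delta L\cdot\tau_{DA}$. Then for any $K\in\mathbb N$ and $\beta_{IA}\in(0,1]$, any Nash equilibrium $\mathbf x^\star$ of the population game with parameters $(K,\beta_{IA})$, and the minimizer $\mathbf y^\star$ of $\overline{SC}$ over $\mathcal Y$ (for the same $K,\beta_{IA}$), $$\frac{SC(\mathbf x^\star)}{\overline{SC}(\mathbf y^\star)}\le 1+d_{\rm avg}\cdot e_{\max}(\mathbf m,K,\beta_{IA}),\qquad e_{\max}(\mathbf m,K,\beta_{IA})=\beta_{IA}\,p_U^i\sum_{k=0}^{K-1}\Big(\frac{\beta_{IA}\,p_U^i}{d_{\rm avg}}\sum_{d\in\mathcal D}d(d-1)m_d\Big)^k.$$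
   Context: Let $D_{\max}\in\mathbb N$, $\mathcal D=\{1,\dots,D_{\max}\}$, $\mathcal A=\{I,N,P\}$. A population size vector is $\mathbf m=(m_d)_{d\in\mathcal D}$ with $m_d>0$, $\sum_d m_d=1$; $d_{\rm avg}=\sum_d d\,m_d$. A social state is $\mathbf x=(x_{d,a})$ with $x_{d,a}\ge0$, $\sum_a x_{d,a}=m_d$. Parameters: $\tau_{DA}\in(0,1]$; $0\le L_P<L_U$, $\Delta L=L_U-L_P$; $0\le p_P^i<p_U^i\le1$; $\beta_{IA}\in(0,1]$; $K\in\mathbb N$; $c_P,c_I\ge0$; $\xi_{\rm cov}\in(0,1]$, $ded\ge0$, $Cov_{\max}\ge0$. Define $w_d=d\,m_d/\sum_{d'}d'm_{d'}$, $g_{d,a}=x_{d,a}/m_d$, $g_{d,U}=g_{d,N}+g_{d,I}$, $\gamma(\mathbf x)=\beta_{IA}\sum_d w_d(g_{d,P}p_P^i+g_{d,U}p_U^i)$, $\lambda(\mathbf x)=\beta_{IA}\sum_d w_d(d-1)(g_{d,P}p_P^i+g_{d,U}p_U^i)$, $e(\mathbf x)=\gamma(\mathbf x)\sum_{k=1}^K\lambda(\mathbf x)^{k-1}$. Costs: $C_{d,P}(\mathbf x)=\tau_{DA}(1+d\,e(\mathbf x))L_P+c_P$, $C_{d,N}(\mathbf x)=\tau_{DA}(1+d\,e(\mathbf x))L_U$, $C_{d,I}(\mathbf x)=C_{d,N}(\mathbf x)+c_I-\min\big(Cov_{\max},\xi_{\rm cov}\max(0,C_{d,N}(\mathbf x)-ded)\big)$.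 A Nash equilibrium is a social state $\mathbf x^\star$ such that $x^\star_{d,a}>0$ implies $C_{d,a}(\mathbf x^\star)=\min_{a'\in\mathcal A}C_{d,a'}(\mathbf x^\star)$. Social cost of a social state: $SC(\mathbf x)=\sum_d\big(x_{d,P}C_{d,P}(\mathbf x)+(m_d-x_{d,P})C_{d,N}(\mathbf x)\big)$. Let $\mathcal Y=\prod_d[0,m_d]$, $\mathbf X(\mathbf y)$ the social state with $X_{d,P}=y_d$, $X_{d,N}=m_d-y_d$, $X_{d,I}=0$, and $\overline{SC}(\mathbf y)=SC(\mathbf X(\mathbf y))$; this has a unique minimizer $\mathbf y^\star$ over $\mathcal Y$. Assumption (A): $L_P<(1-\xi_{\rm cov})L_U$ and $c_P>c_I+ded$. *)

(* Defs.v *)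
From Stdlib Require Import Reals.
Open Scope R_scope.

(* Actions: I (insure), N (nothing), P (protect). *)
Inductive Act := ActI | ActN | ActP.

Fixpoint sumD (n : nat) (f : nat -> R) : R :=
  match n with
  | O => 0
  | S n' => sumD n' f + f n
  end.

Fixpoint geom (K : nat) (l : R) : R :=
  match K with
  | O => 0
  | S K' => geom K' l + l ^ K'
  end.

Definition inD (Dmax d : nat) : Prop := (1 <= d <= Dmax)%nat.

Definition pop_size (Dmax : nat) (m : nat -> R) : Prop :=
  (forall d, inD Dmax d -> 0 < m d) /\ sumD Dmax m = 1.

Definition d_avg (Dmax : nat) (m : nat -> R) : R := sumD Dmax (fun d => INR d * m d).

Definition social_state (Dmax : nat) (m : nat -> R) (x : nat -> Act -> R) : Prop :=
  forall d, inD Dmax d ->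
    (forall a, 0 <= x d a) /\ x d ActI + x d ActN + x d ActP = m d.

Definition wgt (Dmax : nat) (m : nat -> R) (d : nat) : R := INR d * m d / d_avg Dmax m.

Definition gfrac (m : nat -> R) (x : nat -> Act -> R) (d : nat) (a : Act) : R := x d a / m d.

Definition inf_term (pP pU : R) (m : nat -> R) (x : nat -> Act -> R) (d : nat) : R :=
  gfrac m x d ActP * pP + (gfrac m x d ActN + gfrac m x d ActI) * pU.

Definition gammaf (Dmax : nat) (m : nat -> R) (beta pP pU : R) (x : nat -> Act -> R) : R :=
  beta * sumD Dmax (fun d => wgt Dmax m d * inf_term pP pU m x d).

Definition lambdaf (Dmax : nat) (m : nat -> R) (beta pP pU : R) (x : nat -> Act -> R) : R :=
  beta * sumD Dmax (fun d => wgt Dmax m d * (INR d - 1) * inf_term pP pU m x d).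

Definition ef (Dmax : nat) (m : nat -> R) (beta pP pU : R) (K : nat) (x : nat -> Act -> R) : R :=
  gammaf Dmax m beta pP pU x * geom K (lambdaf Dmax m beta pP pU x).

(* Costs C_{d,a}(x); e is passed as the value e(x). *)
Definition costP (tau LP cP e : R) (d : nat) : R := tau * (1 + INR d * e) * LP + cP.
Definition costN (tau LU e : R) (d : nat) : R := tau * (1 + INR d * e) * LU.
Definition costI (tau LU cI xi ded Covmax e : R) (d : nat) : R :=
  costN tau LU e d + cI - Rmin Covmax (xi * Rmax 0 (costN tau LU e d - ded)).

Definition cost (Dmax : nat) (m : nat -> R) (tau LP LU pP pU beta : R) (K : nat)
  (cP cI xi ded Covmax : R) (x : nat -> Act -> R) (d : nat) (a : Act) : R :=
  let e := ef Dmax m beta pP pU K x in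
  match a with
  | ActP => costP tau LP cP e d
  | ActN => costN tau LU e d
  | ActI => costI tau LU cI xi ded Covmax e d
  end.

Definition nash_eq (Dmax : nat) (m : nat -> R) (tau LP LU pP pU beta : R) (K : nat)
  (cP cI xi ded Covmax : R) (x : nat -> Act -> R) : Prop :=
  social_state Dmax m x /\
  forall d, inD Dmax d -> forall a, 0 < x d a ->
    forall a', cost Dmax m tau LP LU pP pU beta K cP cI xi ded Covmax x d a
               <= cost Dmax m tau LP LU pP pU beta K cP cI xi ded Covmax x d a'.

Definition SC (Dmax : nat) (m : nat -> R) (tau LP LU pP pU beta : R) (K : nat)
  (cP : R) (x : nat -> Act -> R) : R :=
  let e := ef Dmax m beta pP pU K x in
  sumD Dmax (fun d => x d ActP * costP tau LP cP e d + (m d - x d ActP) * costN tau LU e d).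

Definition in_Y (Dmax : nat) (m : nat -> R) (y : nat -> R) : Prop :=
  forall d, inD Dmax d -> 0 <= y d <= m d.

Definition Xof (m : nat -> R) (y : nat -> R) : nat -> Act -> R :=
  fun d a => match a with ActP => y d | ActN => m d - y d | ActI => 0 end.

Definition SCbar (Dmax : nat) (m : nat -> R) (tau LP LU pP pU beta : R) (K : nat)
  (cP : R) (y : nat -> R) : R :=
  SC Dmax m tau LP LU pP pU beta K cP (Xof m y).

Definition e_max (Dmax : nat) (m : nat -> R) (K : nat) (beta pU : R) : R :=
  beta * pU * geom K (beta * pU / d_avg Dmax m *
                      sumD Dmax (fun d => INR d * (INR d - 1) * m d)).

(* Main.v *)
Require Import Defs.
From Stdlib Require Import Reals Lra Lia.
Open Scope R_scope.

Lemma sumD_le n f g : (forall d, (1 <= d <= n)%nat -> f d <= g d) -> sumD n f <= sumD n g.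
Proof. induction n; simpl; intros H. lra. apply Rplus_le_compat. apply IHn; intros; apply H; lia. apply H; lia. Qed.

Lemma sumD_ext n f g : (forall d, (1 <= d <= n)%nat -> f d = g d) -> sumD n f = sumD n g.
Proof. induction n; simpl; intros H. lra. f_equal; [apply IHn; intros; apply H; lia | apply H; lia]. Qed.

Lemma sumD_plus n f g : sumD n (fun d => f d + g d) = sumD n f + sumD n g.
Proof. induction n; simpl. lra. rewrite IHn; lra. Qed.

Lemma sumD_scal n c f : sumD n (fun d => c * f d) = c * sumD n f.
Proof. induction n; simpl. lra. rewrite IHn; ring. Qed.

Lemma sumD_nonneg n f : (forall d, (1<=d<=n)%nat -> 0 <= f d) -> 0 <= sumD n f.
Proof. induction n; simpl; intros H. lra. pose proof (H (S n) ltac:(lia)). assert (0 <= sumD n f) by (apply IHn; intros; apply H; lia). lra. Qed.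

Lemma geom_nonneg K a : 0 <= a -> 0 <= geom K a.
Proof. intros H; induction K; simpl; [lra|]. pose proof (pow_le a K H). lra. Qed.

Lemma geom_mono K a b : 0 <= a <= b -> geom K a <= geom K b.
Proof. intros H; induction K; simpl; [lra|]. pose proof (pow_incr a b K H). lra. Qed.

Lemma davg_ge1 Dmax m : pop_size Dmax m -> 1 <= d_avg Dmax m.
Proof. intros [Hpos Hs]. unfold d_avg. rewrite <- Hs. apply sumD_le. intros d Hd.
  assert (1 <= INR d) by (apply (le_INR 1); lia). specialize (Hpos d Hd). nra. Qed.

Lemma sum_wgt Dmax m : pop_size Dmax m -> sumD Dmax (fun d => wgt Dmax m d) = 1.
Proof. intros Hm. pose proof (davg_ge1 _ _ Hm).
  unfold wgt. transitivity (sumD Dmax (fun d => / d_avg Dmax m * (INR d * m d))).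
  - apply sumD_ext. intros; unfold Rdiv; ring.
  - rewrite sumD_scal. change (sumD Dmax (fun d => INR d * m d)) with (d_avg Dmax m). field. lra. Qed.

Lemma wgt_nonneg Dmax m d : pop_size Dmax m -> inD Dmax d -> 0 <= wgt Dmax m d.
Proof. intros Hm Hd. pose proof (davg_ge1 _ _ Hm). destruct Hm as [Hpos _]. specialize (Hpos d Hd).
 unfold wgt, Rdiv. apply Rmult_le_pos. apply Rmult_le_pos. apply pos_INR. lra. left; apply Rinv_0_lt_compat; lra. Qed.

Lemma inf_bounds pP pU m x d : 0 < m d -> (forall a, 0 <= x d a) -> x d ActI + x d ActN + x d ActP = m d -> 0 <= pP <= pU ->
  0 <= inf_term pP pU m x d <= pU.
Proof. intros Hm Hx Hs Hp. unfold inf_term, gfrac.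
  assert (Hg: forall a, 0 <= x d a / m d).
  { intro a. unfold Rdiv. apply Rmult_le_pos; auto. left; apply Rinv_0_lt_compat; lra. }
  assert (Hsum: x d ActP / m d + (x d ActN / m d + x d ActI / m d) = 1).
  { replace (x d ActP / m d + (x d ActN / m d + x d ActI / m d)) with ((x d ActI + x d ActN + x d ActP) / m d) by (field; lra).
    rewrite Hs. field; lra. }
  pose proof (Hg ActP). pose proof (Hg ActN). pose proof (Hg ActI).
  set (gP := x d ActP / m d) in *. set (gN := x d ActN / m d) in *. set (gI := x d ActI / m d) in *.
  split; nra. Qed.

Lemma ef_bounds Dmax m beta pP pU K x : pop_size Dmax m -> social_state Dmax m x -> 0 <= beta -> 0 <= pP <= pU ->
  0 <= ef Dmax m beta pP pU K x <= e_max Dmax m K beta pU.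
Proof.
  intros Hm Hx Hb Hp. pose proof (davg_ge1 _ _ Hm) as HD.
  assert (Hinf : forall d, inD Dmax d -> 0 <= inf_term pP pU m x d <= pU).
  { intros d Hd. destruct (Hx d Hd) as [H1 H2]. apply inf_bounds; auto. apply (proj1 Hm d Hd). }
  assert (Hg : 0 <= gammaf Dmax m beta pP pU x <= beta * pU).
  { unfold gammaf. split.
    - apply Rmult_le_pos; auto. apply sumD_nonneg. intros d Hd.
      pose proof (Hinf d Hd). pose proof (wgt_nonneg Dmax m d Hm Hd). nra.
    - assert (sumD Dmax (fun d => wgt Dmax m d * inf_term pP pU m x d) <= sumD Dmax (fun d => pU * wgt Dmax m d)).
      { apply sumD_le. intros d Hd. pose proof (Hinf d Hd). pose proof (wgt_nonneg Dmax m d Hm Hd). nra. }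
      rewrite sumD_scal, sum_wgt in H by auto. nra. }
  assert (Hl : 0 <= lambdaf Dmax m beta pP pU x <=
     beta * pU / d_avg Dmax m * sumD Dmax (fun d => INR d * (INR d - 1) * m d)).
  { unfold lambdaf. split.
    - apply Rmult_le_pos; auto. apply sumD_nonneg. intros d Hd.
      pose proof (Hinf d Hd). pose proof (wgt_nonneg Dmax m d Hm Hd).
      assert (0 <= INR d - 1) by (assert (1 <= INR d) by (apply (le_INR 1); unfold inD in Hd; lia); lra).
      apply Rmult_le_pos; [apply Rmult_le_pos|]; lra.
    - assert (sumD Dmax (fun d => wgt Dmax m d * (INR d - 1) * inf_term pP pU m x d) <=
              sumD Dmax (fun d => (pU / d_avg Dmax m) * (INR d * (INR d - 1) * m d))).
      { apply sumD_le. intros d Hd. pose proof (Hinf d Hd). pose proof (wgt_nonneg Dmax m d Hm Hd).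
        assert (0 <= INR d - 1) by (assert (1 <= INR d) by (apply (le_INR 1); unfold inD in Hd; lia); lra).
        replace (pU / d_avg Dmax m * (INR d * (INR d - 1) * m d)) with (wgt Dmax m d * (INR d - 1) * pU)
          by (unfold wgt; field; lra).
        apply Rmult_le_compat_l; [apply Rmult_le_pos|]; lra. }
      rewrite sumD_scal in H.
      replace (beta * pU / d_avg Dmax m * sumD Dmax (fun d => INR d * (INR d - 1) * m d))
        with (beta * (pU / d_avg Dmax m * sumD Dmax (fun d => INR d * (INR d - 1) * m d)))
        by (unfold Rdiv; ring).
      apply Rmult_le_compat_l; lra. }
  unfold ef, e_max. pose proof (geom_nonneg K _ (proj1 Hl)). split.
  - apply Rmult_le_pos; lra.
  - apply Rmult_le_compat; try lra. apply geom_mono. lra.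
Qed.

Lemma SC_upper Dmax m tau LP LU pP pU beta K cP cI xi ded Covmax x :
  pop_size Dmax m -> nash_eq Dmax m tau LP LU pP pU beta K cP cI xi ded Covmax x ->
  SC Dmax m tau LP LU pP pU beta K cP x <= tau * LU * (1 + d_avg Dmax m * ef Dmax m beta pP pU K x).
Proof.
  intros Hm [Hss Hn]. unfold SC; cbv zeta.
  set (e := ef Dmax m beta pP pU K x) in *.
  apply Rle_trans with (sumD Dmax (fun d => tau*LU * m d + (tau*LU*e) * (INR d * m d))).
  - apply sumD_le. intros d Hd. destruct (Hss d Hd) as [Hx _].
    assert (Hc: x d ActP * costP tau LP cP e d <= x d ActP * costN tau LU e d).
    { destruct (Rle_lt_or_eq_dec 0 (x d ActP) (Hx ActP)) as [Hlt|Heq].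
      - apply Rmult_le_compat_l; [lra|]. exact (Hn d Hd ActP Hlt ActN).
      - rewrite <- Heq; lra. }
    unfold costN in *. nra.
  - rewrite sumD_plus, !sumD_scal. destruct Hm as [_ Hs]. rewrite Hs.
    change (sumD Dmax (fun d => INR d * m d)) with (d_avg Dmax m). lra.
Qed.

Lemma SCbar_lower Dmax m tau LP LU pP pU beta K cP y :
  pop_size Dmax m -> in_Y Dmax m y -> 0 < tau -> 0 <= LP -> 0 <= beta -> 0 <= pP <= pU ->
  tau*LU <= tau*LP + cP -> 0 <= LU ->
  tau * LU <= SCbar Dmax m tau LP LU pP pU beta K cP y.
Proof.
  intros Hm HY Ht HLP Hb Hp HcP HLU. unfold SCbar, SC; cbv zeta.
  assert (He: 0 <= ef Dmax m beta pP pU K (Xof m y)).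
  { apply (ef_bounds Dmax m beta pP pU K (Xof m y) Hm); auto.
    intros d Hd. specialize (HY d Hd). split.
    - intros []; simpl; lra.
    - simpl. lra. }
  set (e := ef Dmax m beta pP pU K (Xof m y)) in *.
  apply Rle_trans with (sumD Dmax (fun d => tau*LU*m d)).
  - rewrite sumD_scal. destruct Hm as [_ Hs]; rewrite Hs; lra.
  - apply sumD_le. intros d Hd. specialize (HY d Hd). cbv beta iota delta [Xof]. unfold costP, costN.
    assert (Hq : 0 <= INR d * e) by (apply Rmult_le_pos; [apply pos_INR|lra]).
    set (q := INR d * e) in *.
    assert (A : tau*LU <= tau*(1+q)*LP + cP).
    { assert (0 <= tau*q*LP) by (apply Rmult_le_pos; [apply Rmult_le_pos|]; lra). nra. }
    assert (B : tau*LU <= tau*(1+q)*LU).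
    { assert (0 <= tau*q*LU) by (apply Rmult_le_pos; [apply Rmult_le_pos|]; lra). nra. }
    nra.
Qed.

Theorem theorem7
  (Dmax : nat) (m : nat -> R)
  (tau LP LU pP pU cP cI xi ded Covmax : R)
  (Hm : pop_size Dmax m)
  (Htau : 0 < tau <= 1)
  (HL : 0 <= LP < LU)
  (HpP : 0 <= pP) (Hp : pP < pU) (HpU : pU <= 1)
  (HcP : 0 <= cP) (HcI : 0 <= cI)
  (Hxi : 0 < xi <= 1) (Hded : 0 <= ded) (HCov : 0 <= Covmax)
  (HA1 : LP < (1 - xi) * LU) (HA2 : cP > cI + ded)
  (HcPL : cP >= (LU - LP) * tau) :
  forall (K : nat) (beta : R), (1 <= K)%nat -> 0 < beta <= 1 ->
  forall (xstar : nat -> Act -> R) (ystar : nat -> R),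
    nash_eq Dmax m tau LP LU pP pU beta K cP cI xi ded Covmax xstar ->
    in_Y Dmax m ystar ->
    (forall y, in_Y Dmax m y ->
       SCbar Dmax m tau LP LU pP pU beta K cP ystar
       <= SCbar Dmax m tau LP LU pP pU beta K cP y) ->
    SC Dmax m tau LP LU pP pU beta K cP xstar
      / SCbar Dmax m tau LP LU pP pU beta K cP ystar
    <= 1 + d_avg Dmax m * e_max Dmax m K beta pU.
Proof.
  intros K beta HK Hb xs ys Hn HY _.
  pose proof (davg_ge1 _ _ Hm) as HD.
  pose proof (SC_upper _ _ _ _ _ _ _ _ _ _ _ _ _ _ _ Hm Hn) as Hup.
  pose proof (ef_bounds Dmax m beta pP pU K xs Hm (proj1 Hn) ltac:(lra) ltac:(lra)) as He.
  assert (Hlow : tau * LU <= SCbar Dmax m tau LP LU pP pU beta K cP ys).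
  { apply SCbar_lower; auto; try lra. }
  set (a := SC Dmax m tau LP LU pP pU beta K cP xs) in *.
  set (b := SCbar Dmax m tau LP LU pP pU beta K cP ys) in *.
  set (e := ef Dmax m beta pP pU K xs) in *.
  set (em := e_max Dmax m K beta pU) in *.
  set (D := d_avg Dmax m) in *.
  assert (HtL : 0 < tau * LU) by nra.
  assert (Hb0 : 0 < b) by lra.
  assert (H1 : a <= tau * LU * (1 + D * em)).
  { apply Rle_trans with (1 := Hup). apply Rmult_le_compat_l; [lra|]. nra. }
  apply Rmult_le_reg_r with b; [lra|]. unfold Rdiv. rewrite Rmult_assoc, Rinv_l by lra.
  assert (0 <= 1 + D * em) by nra. nra.
Qed.
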